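(* Let $(X,S)$ be an $S$-metric space, $r\ge0$, and let $\{x_n\}$ be an $r$-statistically convergent sequence in $X$. Then $st\text{-}LIM^r x_n$ is a closed set in the topology induced by $S$.
   Context: An $S$-metric on a nonempty set $X$ is a function $S:X^3\to[0,\infty)$ such that for all $x,y,z,a\in X$: $S(x,y,z)=0$ if and only if $x=y=z$, and $S(x,y,z)\le S(x,x,a)+S(y,y,a)+S(z,z,a)$. The open balls $B_S(x,r)=\{y\in X: S(y,y,x)<r\}$ form a base of the topology induced by $S$. For $B\subset\mathbb N$ the natural density is $\delta(B)=\lim_{n\to\infty}\frac{|\{k\in B:k\le n\}|}{n}$ when the limit exists. For $r\ge0$, $\{x_n\}$ is $r$-statistically convergent to $x$ if for every $\varepsilon>0$, $\delta(\{n\in\mathbb N: S(x_n,x_n,x)\ge r+\varepsilon\})=0$; $st\text{-}LIM^r x_n$ denotes the set of all such $x\in X$, and $\{x_n\}$ is called $r$-statistically convergent if this set is nonempty. *)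

(* Defs.v *)
From Stdlib Require Import Reals ClassicalDescription.
Open Scope R_scope.

Definition is_S_metric {X : Type} (S : X -> X -> X -> R) : Prop :=
  (forall x y z, 0 <= S x y z) /\
  (forall x y z, S x y z = 0 <-> (x = y /\ y = z)) /\
  (forall x y z a, S x y z <= S x x a + S y y a + S z z a).

Definition S_ball {X : Type} (S : X -> X -> X -> R) (x : X) (r : R) : X -> Prop :=
  fun y => S y y x < r.

(* topology generated by the base of open balls:
   U is open iff every point of U lies in some ball contained in U *)
Definition S_open {X : Type} (S : X -> X -> X -> R) (U : X -> Prop) : Prop :=
  forall y, U y -> exists x r, S_ball S x r y /\ (forall z, S_ball S x r z -> U z).

Definition S_closed {X : Type} (S : X -> X -> X -> R) (F : X -> Prop) : Prop :=
  S_open S (fun z => ~ F z).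

Fixpoint count_upto (B : nat -> Prop) (n : nat) : nat :=
  match n with
  | O => O
  | S m => (if excluded_middle_informative (B (S m)) then 1 else 0)%nat
           + count_upto B m
  end.

Definition density_zero (B : nat -> Prop) : Prop :=
  Un_cv (fun n => INR (count_upto B (S n)) / INR (S n)) 0.

Definition r_st_lim {X : Type} (S : X -> X -> X -> R) (r : R) (xs : nat -> X) (x : X) : Prop :=
  forall eps, 0 < eps -> density_zero (fun n => S (xs n) (xs n) x >= r + eps).

(* Main.v *)
Require Import Defs.
From Stdlib Require Import Reals Lra Lia ClassicalDescription.
Open Scope R_scope.

Lemma count_mono (A B : nat -> Prop) : (forall n, A n -> B n) ->
  forall n, (count_upto A n <= count_upto B n)%nat.
Proof.
  intros H n; induction n as [|n IH]; simpl; [lia|].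
  destruct (excluded_middle_informative (A (S n)));
  destruct (excluded_middle_informative (B (S n))); try lia.
  exfalso; auto.
Qed.

Lemma dz_mono (A B : nat -> Prop) : (forall n, A n -> B n) ->
  density_zero B -> density_zero A.
Proof.
  unfold density_zero, Un_cv, R_dist. intros H HB e He.
  destruct (HB e He) as [N HN]. exists N. intros n Hn.
  specialize (HN n Hn).
  assert (Hc := count_mono A B H (S n)).
  apply le_INR in Hc.
  assert (Hp : 0 < INR (S n)) by (apply lt_0_INR; lia).
  assert (H0 : 0 <= INR (count_upto A (S n))) by apply pos_INR.
  rewrite Rminus_0_r in *.
  assert (0 <= INR (count_upto A (S n)) / INR (S n)) by
    (apply Rmult_le_pos; [lra| left; apply Rinv_0_lt_compat; lra]).
  assert (INR (count_upto A (S n)) / INR (S n) <= INR (count_upto B (S n)) / INR (S n)) by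
    (apply Rmult_le_compat_r; [left; apply Rinv_0_lt_compat; lra| lra]).
  rewrite Rabs_right in HN by lra. rewrite Rabs_right by lra. lra.
Qed.

Theorem corollary4p1 (X : Type) (S : X -> X -> X -> R) (r : R) (xs : nat -> X) :
  is_S_metric S -> 0 <= r ->
  (exists x, r_st_lim S r xs x) ->
  S_closed S (r_st_lim S r xs).
Proof.
  intros [Hnn [Hz Ht]] _ _.
  assert (Hsym : forall x y, S x x y <= S y y x).
  { intros x y. pose proof (Ht x x y x).
    assert (S x x x = 0) by (apply Hz; auto). lra. }
  assert (Hzero : forall x, S x x x = 0) by (intros; apply Hz; auto).
  intros y Hy. unfold r_st_lim in Hy.
  apply Classical_Pred_Type.not_all_ex_not in Hy as [eps Heps].
  apply Classical_Prop.imply_to_and in Heps as [He Hnd].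
  exists y, (eps/4). split.
  - unfold S_ball. rewrite Hzero. lra.
  - intros z Hzb Hzl. apply Hnd.
    apply (dz_mono _ (fun n => S (xs n) (xs n) z >= r + eps/2)).
    + intros n Hn. unfold S_ball in Hzb.
      pose proof (Ht y y (xs n) z).
      pose proof (Hsym (xs n) y). pose proof (Hsym y (xs n)).
      pose proof (Hsym y z). pose proof (Hsym z y). lra.
    + apply Hzl. lra.
Qed.
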